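(* For all integers $m\ge 2$, $n\ge 2$, the state complexity of $L(M)^*\cap L(N)$, where $M$ ranges over complete DFAs with $m$ states and $N$ over complete DFAs with $n$ states (over a common alphabet), is exactly $\frac{3}{4}2^m\cdot n-n+1$: for every such $M,N$ some DFA with at most $\frac{3}{4}2^m\cdot n-n+1$ states accepts $L(M)^*\cap L(N)$, and there exist such $M,N$ for which the minimal complete DFA of $L(M)^*\cap L(N)$ has exactly $\frac{3}{4}2^m\cdot n-n+1$ states.
   Context: DFAs are complete deterministic finite automata; $L(M)$ is the accepted language; $L^*$ is the Kleene star. The state complexity of a regular language is the number of states of its minimal complete DFA; the state complexity of an operation is the maximum state complexity of its result over all argument DFAs of the given sizes. *)

(* Defs.v *)
From mathcomp Require Import all_boot.
Set Implicit Arguments. Unset Strict Implicit. Unset Printing Implicit Defensive.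

Record dfa (Sigma Q : finType) := Dfa {
  start : Q;
  delta : Q -> Sigma -> Q;
  final : pred Q }.

Definition language (Sigma : finType) := seq Sigma -> Prop.

Definition lang (Sigma Q : finType) (A : dfa Sigma Q) : language Sigma :=
  fun w => final A (foldl (delta A) (start A) w).

Definition star (Sigma : finType) (L : language Sigma) : language Sigma :=
  fun w => exists ws : seq (seq Sigma), w = flatten ws /\ (forall u, u \in ws -> L u).

Definition inter (Sigma : finType) (L1 L2 : language Sigma) : language Sigma :=
  fun w => L1 w /\ L2 w.

Definition recognizes (Sigma Q : finType) (A : dfa Sigma Q) (L : language Sigma) :=
  forall w, lang A w <-> L w.

Definition state_complexity_is (Sigma : finType) (L : language Sigma) (k : nat) :=
  (exists A : dfa Sigma 'I_k, recognizes A L) /\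
  (forall (k' : nat) (A : dfa Sigma 'I_k'), recognizes A L -> k <= k').

(* Main.v *)
Require Import Defs.
From mathcomp Require Import all_boot.
Set Implicit Arguments. Unset Strict Implicit. Unset Printing Implicit Defensive.

Section Gen.
Variable Sigma : finType.

Lemma transport_cancel (T T' : finType) (A : dfa Sigma T) (h : T -> T') (g : T' -> T) :
  cancel h g ->
  exists B : dfa Sigma T', forall w, lang B w <-> lang A w.
Proof.
move=> hg.
exists (Dfa (h (start A)) (fun s a => h (delta A (g s) a)) (fun s => final A (g s))).
move=> w; rewrite /lang /=.
suff -> : forall s, g (foldl (fun s a => h (delta A (g s) a)) (h s) w) = foldl (delta A) s w by [].
elim: w => [|a w IH] s /=; first by rewrite hg.
by rewrite hg IH.
Qed.

Lemma transport_le (T : finType) (A : dfa Sigma T) k : #|T| <= k ->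
  exists B : dfa Sigma 'I_k, forall w, lang B w <-> lang A w.
Proof.
move=> hk.
apply: (@transport_cancel _ _ A (fun t => widen_ord hk (enum_rank t))
   (fun i => nth (start A) (enum T) i)).
by move=> t /=; rewrite nth_enum_rank.
Qed.

Lemma transport_inv (T : finType) (A : dfa Sigma T) (P : pred T) k :
  P (start A) -> (forall s a, P s -> P (delta A s a)) -> #|[set x | P x]| <= k ->
  exists B : dfa Sigma 'I_k, forall w, lang B w <-> lang A w.
Proof.
move=> Ps Pd hk.
pose S := {x : T | P x}.
pose d (s : S) a : S := exist _ (delta A (val s) a) (Pd _ a (valP s)).
pose C := Dfa (exist _ (start A) Ps : S) d (fun s => final A (val s)).
have hS : #|{: {x : T | P x}}| <= k.
  by rewrite card_sig; apply: leq_trans hk; rewrite cardsE.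
move: (transport_le C hS) => [B HB]; exists B => w; apply: iff_trans (HB w) _; rewrite /lang /=.
suff -> : forall s, val (foldl d s w) = foldl (delta A) (val s) w by [].
by elim: w => [|a w IH] s //=; rewrite IH.
Qed.

Definition prodD (T1 T2 : finType) (A : dfa Sigma T1) (B : dfa Sigma T2) : dfa Sigma (T1 * T2)%type :=
  Dfa (start A, start B) (fun s a => (delta A s.1 a, delta B s.2 a))
      (fun s => final A s.1 && final B s.2).

Lemma foldl_prod (T1 T2 : finType) (A : dfa Sigma T1) (B : dfa Sigma T2) w s :
  foldl (delta (prodD A B)) s w = (foldl (delta A) s.1 w, foldl (delta B) s.2 w).
Proof. by elim: w s => [|a w IH] [s1 s2] //=; rewrite IH. Qed.

Lemma prodD_lang (T1 T2 : finType) (A : dfa Sigma T1) (B : dfa Sigma T2) w :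
  lang (prodD A B) w <-> lang A w /\ lang B w.
Proof. rewrite /lang foldl_prod /=; split; [by move/andP | by move=> [-> ->]]. Qed.

End Gen.

Section Star.
Variables (Sigma Q : finType) (M : dfa Sigma Q).
Notation L := (lang M).
Notation q0 := (start M).

Lemma star_nil : star L [::].
Proof. by exists [::]. Qed.

Lemma star_cat u v : star L u -> L v -> star L (u ++ v).
Proof.
move=> [ws [-> Hws]] Lv; exists (ws ++ [:: v]); split.
  by rewrite flatten_cat /= cats0.
by move=> x; rewrite mem_cat inE => /orP [/Hws|/eqP ->].
Qed.

Lemma star_dec w : star L w -> w = [::] \/
  exists u v, [/\ w = u ++ v, star L u, L v & v <> [::]].
Proof.
move=> [ws [-> Hws]]; elim/last_ind: ws Hws => [|ws v IH] Hws; first by left.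
rewrite -cats1 flatten_cat /= cats0.
have Hws' : forall x, x \in ws -> L x by move=> x hx; apply: Hws; rewrite mem_rcons inE hx orbT.
case: v Hws => [|b v] Hws.
  by rewrite cats0; apply: IH.
right; exists (flatten ws), (b :: v); split => //.
  by exists ws.
by apply: Hws; rewrite mem_rcons inE eqxx.
Qed.

Definition Sp (S : {set Q}) := if S == set0 then [set q0] else S.
Definition close (X : {set Q}) := if [exists q in X, final M q] then q0 |: X else X.
Definition sdelta S a := close [set delta M q a | q in Sp S].
Definition sfinal S := (S == set0) || [exists q in S, final M q].
Definition starD := Dfa set0 sdelta sfinal.

Definition Tw w q := exists u v, [/\ w = u ++ v, star L u & foldl (delta M) q0 v = q].

Lemma Sp_n0 S : Sp S != set0.
Proof.
rewrite /Sp; case: ifP => [_|/negbT //]; apply/set0Pn; exists q0; by rewrite inE.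
Qed.

Lemma close_sub (X : {set Q}) : X \subset close X.
Proof. rewrite /close; case: ifP => // _; exact: subsetUr. Qed.

Lemma close_final (X : {set Q}) : [exists q in close X, final M q] = [exists q in X, final M q].
Proof.
rewrite /close; case: ifP => // hX.
case/existsP: hX => q /andP [hq fq]; apply/existsP; exists q; by rewrite !inE hq orbT.
Qed.

Lemma Tw_rcons w a q : Tw (rcons w a) q <->
  (exists q', Tw w q' /\ q = delta M q' a) \/ (q = q0 /\ star L (rcons w a)).
Proof.
split.
  move=> [u [v [Huv Su Hq]]]; case/lastP: v Huv Hq => [|v b].
    by rewrite cats0 => Hu; subst u => /= <-; right.
  rewrite -rcons_cat => /rcons_inj [-> ->]; rewrite foldl_rcons => <-; left.
  by exists (foldl (delta M) q0 v); split => //; exists u, v.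
case=> [[q' [[u [v [Hw Su Hq]]] Hq']]|[Hq' Sw]].
  by exists u, (rcons v a); rewrite Hw rcons_cat foldl_rcons Hq Hq'.
by exists (rcons w a), [::]; rewrite cats0 Hq'.
Qed.

Lemma star_rcons w a : star L (rcons w a) <-> exists q', Tw w q' /\ final M (delta M q' a).
Proof.
split.
  case/star_dec => [h|[u [v [Huv Su Lv vn]]]]; first by move: (congr1 size h); rewrite size_rcons.
  case/lastP: v Huv Lv vn => [//|v b].
  rewrite -rcons_cat => /rcons_inj [-> ->]; rewrite /lang foldl_rcons => Lv _.
  by exists (foldl (delta M) q0 v); split => //; exists u, v.
move=> [q' [[u [v [Hw Su Hq]]] F]]; rewrite Hw rcons_cat; apply: star_cat => //.
by rewrite /lang foldl_rcons Hq.
Qed.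

Lemma inv w q : q \in Sp (foldl sdelta set0 w) <-> Tw w q.
Proof.
elim/last_ind: w q => [|w a IH] q.
  rewrite /= /Sp eqxx inE; split => [/eqP ->|[u [v [Huv _ <-]]]].
    by exists [::], [::]; split => //; apply: star_nil.
  by case: u Huv => [|? ?] //; case: v => [|? ?].
rewrite foldl_rcons.
set X := [set delta M q a | q in Sp (foldl sdelta set0 w)].
have Xn : X != set0.
  case/set0Pn: (Sp_n0 (foldl sdelta set0 w)) => q1 hq1; apply/set0Pn; exists (delta M q1 a).
  exact: imset_f.
have -> : Sp (sdelta (foldl sdelta set0 w) a) = close X.
  rewrite /Sp /sdelta -/X; case: eqP => // /eqP h.
  by move: Xn; rewrite -subset0 => /negP []; rewrite -(eqP h) close_sub.
have HX : forall q, q \in X <-> exists q', Tw w q' /\ q = delta M q' a.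
  move=> r; split.
    by case/imsetP => q' /IH hq' ->; exists q'.
  by move=> [q' [/IH hq' ->]]; apply: imset_f.
have HF : [exists q in X, final M q] <-> star L (rcons w a).
  apply: iff_trans _ (iff_sym (star_rcons w a)); split.
    by case/existsP => r /andP [/HX [q' [hq' ->]] fr]; exists q'.
  by move=> [q' [hq' fq]]; apply/existsP; exists (delta M q' a); rewrite fq andbT; apply/HX; exists q'.
apply: iff_trans _ (iff_sym (Tw_rcons w a q)); rewrite /close; case: ifP => hX.
  rewrite in_setU1; split.
    by case/orP => [/eqP ->|/HX h]; [right; split => //; apply/HF|left].
  by case => [/HX h|[-> _]]; rewrite ?h ?eqxx ?orbT.
split; first by move/HX; left.
case => [/HX //|[_ /HF]]; by rewrite hX.
Qed.

Lemma star_correct : recognizes starD (star L).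
Proof.
move=> w; rewrite /lang /=; case/lastP: w => [|w a].
  by rewrite /= /sfinal eqxx; split => // _; apply: star_nil.
apply: iff_trans _ (iff_sym (star_rcons w a)).
rewrite foldl_rcons /sfinal.
set X := [set delta M q a | q in Sp (foldl sdelta set0 w)].
have Xn : X != set0.
  case/set0Pn: (Sp_n0 (foldl sdelta set0 w)) => q1 hq1; apply/set0Pn; exists (delta M q1 a).
  exact: imset_f.
have -> : (sdelta (foldl sdelta set0 w) a == set0) = false.
  apply/negP => /eqP h; move: Xn; rewrite -subset0 => /negP []; rewrite -h; exact: close_sub.
rewrite /= /sdelta -/X close_final; split.
  case/existsP => r /andP [/imsetP [q' /inv hq' ->] fr]; by exists q'.
move=> [q' [/inv hq' fq]]; apply/existsP; exists (delta M q' a); rewrite fq andbT; exact: imset_f.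
Qed.

Lemma sdelta_n0 S a : sdelta S a != set0.
Proof.
set X := [set delta M q a | q in Sp S].
have Xn : X != set0.
  case/set0Pn: (Sp_n0 S) => q1 hq1; apply/set0Pn; exists (delta M q1 a).
  exact: imset_f.
apply/negP => /eqP h; move: Xn; rewrite -subset0 => /negP []; rewrite -h; exact: close_sub.
Qed.

Lemma close_in x (X : {set Q}) : final M x -> x \in close X -> q0 \in close X.
Proof.
rewrite /close => fx; case: ifP => [_ _|hX hx]; first by rewrite setU11.
by move/negbT: hX => /existsP []; exists x; rewrite hx fx.
Qed.

End Star.

Section Count.
Variable T : finType.

Definition VS (x y : T) := [set S : {set T} | (S != set0) && ((x \in S) ==> (y \in S))].

Lemma card_VS x y : x != y -> #|VS x y| = 3 * 2 ^ (#|T| - 2) - 1.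
Proof.
move=> xy.
pose W := [set S : {set T} | (x \in S) ==> (y \in S)].
have hV : #|W| = (set0 \in W) + #|VS x y|.
  rewrite (cardsD1 set0 W); congr (_ + _); apply: eq_card => S; rewrite !inE andbC.
  by [].
have hW0 : set0 \in W by rewrite inE in_set0.
pose D := ~: [set x; y].
have hD : #|D| = #|T| - 2.
  by rewrite -(cardsC [set x; y]) cards2 xy addKn.
have hT2 : 2 <= #|T|.
  by rewrite -(cardsC [set x; y]) cards2 xy leq_addr.
have hC : ~: W = [set x |: A | A in powerset D].
  apply/setP => S; rewrite !inE negb_imply; apply/andP/imsetP.
    move=> [xS yS]; exists (S :\ x); last by rewrite setD1K.
    rewrite inE; apply/subsetP => z; rewrite !inE => /andP [zx zS].
    by rewrite negb_or zx /=; apply/eqP => zy; move: yS; rewrite -zy zS.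
  move=> [A]; rewrite inE => /subsetP AD ->; rewrite !inE eqxx /=; split => //.
  rewrite negb_or eq_sym xy /=; apply/negP => /AD; by rewrite !inE eqxx orbT.
have hCc : #|~: W| = 2 ^ (#|T| - 2).
  rewrite hC card_in_imset ?card_powerset ?hD //.
  move=> A B; rewrite !inE => AD BD h.
  have xA : x \notin A by apply/negP => /(subsetP AD); rewrite !inE eqxx.
  have xB : x \notin B by apply/negP => /(subsetP BD); rewrite !inE eqxx.
  by rewrite -(setU1K xA) h setU1K.
have hall : #|W| + #|~: W| = 2 ^ #|T|.
  by rewrite cardsC -cardsT -powersetT card_powerset cardsT.
move: hall; rewrite hV hW0 hCc.
have -> : 2 ^ #|T| = 2 ^ (#|T| - 2) * 4 by rewrite -{1}(subnK hT2) expnD.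
move=> h.
have : 1 + #|VS x y| = 3 * 2 ^ (#|T| - 2).
  apply/eqP; rewrite -(eqn_add2r (2 ^ (#|T| - 2))) h; apply/eqP.
  by rewrite -[in X in _ = _ + X](mul1n (2 ^ (#|T| - 2))) -mulnDl mulnC.
by move=> <-; rewrite addKn.
Qed.

Variable P : finType.
Definition valid (x y : T) (p0 : P) (s : {set T} * P) :=
  if s.1 == set0 then s.2 == p0 else (x \in s.1) ==> (y \in s.1).

Lemma card_valid x y p0 : x != y ->
  #|[set s | valid x y p0 s]| = 1 + (3 * 2 ^ (#|T| - 2) - 1) * #|P|.
Proof.
move=> xy.
have -> : [set s | valid x y p0 s] = (set0, p0) |: setX (VS x y) [set: P].
  apply/setP => [[S p]]; rewrite !inE /valid /= xpair_eqE.
  by case: (S =P set0) => [->|/eqP h] /=; rewrite ?orbF ?andbT ?h.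
rewrite cardsU1 cardsX card_VS // cardsT in_setX inE eqxx.
by [].
Qed.

End Count.

Lemma arith1 t : 2 <= t -> t <= 3 * 2 ^ (t - 2) - 1.
Proof.
case: t => [|[|t]] // _; rewrite !subSS ?subn0.
have h : t.+3 <= 3 * 2 ^ t.
  elim: t => [//|t IH]; rewrite expnS mulnCA.
  apply: leq_trans (_ : 2 * t.+3 <= _); last by rewrite leq_mul2l.
  by rewrite mul2n -addnn addSn ltnS !addnS !ltnS leq_addl.
by have := leq_sub2r 1 h; rewrite subn1.
Qed.

Lemma recog_iff Sigma (T : finType) (A : dfa Sigma T) (L1 L2 : language Sigma) :
  recognizes A L1 -> (forall w, L1 w <-> L2 w) -> recognizes A L2.
Proof. by move=> h1 h2 w; apply: iff_trans (h1 w) (h2 w). Qed.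

Lemma upper (Sigma Q P : finType) (M : dfa Sigma Q) (N : dfa Sigma P) :
  2 <= #|Q| ->
  exists A : dfa Sigma 'I_(1 + (3 * 2 ^ (#|Q| - 2) - 1) * #|P|),
    recognizes A (inter (star (lang M)) (lang N)).
Proof.
move=> hQ.
set K := 1 + _ * _.
have hK1 : #|Q| <= 3 * 2 ^ (#|Q| - 2) - 1 := arith1 hQ.
case: (boolP [exists x, final M x && (x != start M)]).
  case/existsP => x /andP [fx xq].
  pose C := prodD (starD M) N.
  have [B HB] : exists B : dfa Sigma 'I_K, forall w, lang B w <-> lang C w.
    apply: (@transport_inv _ _ C (valid x (start M) (start N))).
    - by rewrite /valid /= eqxx.
    - move=> [S p] a _; rewrite /valid /= (negbTE (sdelta_n0 _ _ _)).
      by apply/implyP; apply: close_in.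
    - by rewrite card_valid.
  exists B => w; apply: iff_trans (HB w) _; apply: iff_trans (prodD_lang _ _ _) _.
  rewrite /inter; split => [[h1 h2]|[h1 h2]]; split => //; by apply/star_correct.
rewrite negb_exists => /forallP Hx.
have HF : forall q, final M q -> q = start M.
  by move=> q fq; move: (Hx q); rewrite fq /= negbK => /eqP.
case: (boolP (final M (start M))) => f0.
  have hst : forall w, star (lang M) w <-> lang M w.
    move=> w; split; last first.
      by move=> Lw; exists [:: w]; split; [rewrite /= cats0|move=> u; rewrite inE => /eqP ->].
    move=> [ws [-> Hws]]; elim: ws Hws => [|u ws IH] Hws; first by [].
    have Lu : lang M u by apply: Hws; rewrite inE eqxx.
    rewrite /lang /= foldl_cat (HF _ Lu); by apply: IH => v hv; apply: Hws; rewrite inE hv orbT.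
  have [B HB] : exists B : dfa Sigma 'I_K, forall w, lang B w <-> lang (prodD M N) w.
    apply: (@transport_le _ _ (prodD M N)); rewrite card_prod /K; apply: leq_trans (leq_addl _ _).
    by rewrite leq_mul2r hK1 orbT.
  exists B => w; apply: iff_trans (HB w) _; apply: iff_trans (prodD_lang _ _ _) _.
  rewrite /inter; split => [[h1 h2]|[h1 h2]]; split => //; by apply/hst.
have hst : forall w, star (lang M) w <-> w = [::].
  move=> w; split; last by move=> ->; apply: star_nil.
  case/star_dec => [//|[u [v [_ _ Lv _]]]].
  by have e := HF _ Lv; move: Lv; rewrite /lang e (negbTE f0).
pose A1 := Dfa true (fun (_ : bool) (_ : Sigma) => false) id.
have hA1 : forall w, lang A1 w <-> w = [::].
  move=> [|a w]; first by rewrite /lang. rewrite /lang /=; case/lastP: w => [|w b]; rewrite ?foldl_rcons /=; by split.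
have [B HB] : exists B : dfa Sigma 'I_K, forall w, lang B w <-> lang (prodD A1 N) w.
  apply: (@transport_le _ _ (prodD A1 N)); rewrite card_prod card_bool /K; apply: leq_trans (leq_addl _ _).
  rewrite leq_mul2r; apply/orP; right; apply: leq_trans hK1; exact: hQ.
exists B => w; apply: iff_trans (HB w) _; apply: iff_trans (prodD_lang _ _ _) _.
rewrite /inter; split => [[h1 h2]|[h1 h2]]; split => //.
  by apply/hst/hA1.
by apply/hA1/hst.
Qed.

Lemma surj (A : finType) (T S : {set A}) : S != set0 -> #|S| <= #|T| ->
  exists f : A -> A, [set f x | x in T] = S.
Proof.
case/set0Pn => s0 hs0 hST.
exists (fun x => nth s0 (enum S) (index x (enum T))).
apply/setP => y; apply/imsetP/idP.
  move=> [x hx ->]; case: (ltnP (index x (enum T)) (size (enum S))) => h.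
    by rewrite -mem_enum mem_nth.
  by rewrite nth_default.
move=> hy; set i := index y (enum S).
have hi : i < size (enum S) by rewrite index_mem mem_enum.
have hiT : i < size (enum T) by apply: leq_trans hi _; rewrite -!cardE.
exists (nth y (enum T) i); first by rewrite -mem_enum mem_nth.
by rewrite index_uniq ?enum_uniq // nth_index // mem_enum.
Qed.

Section Witness.
Variables m' n' : nat.
Notation m := m'.+2.
Notation n := n'.+2.
Definition Sig := ({ffun 'I_m -> 'I_m} * {ffun 'I_n -> 'I_n})%type.
Definition WM : dfa Sig 'I_m := Dfa ord0 (fun q (a : Sig) => a.1 q) (fun q => q == ord_max).
Definition WN : dfa Sig 'I_n := Dfa ord0 (fun p (a : Sig) => a.2 p) (fun p => p == ord0).
Definition WC := prodD (starD WM) WN.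

Lemma ord0_max : (ord0 : 'I_m) != ord_max.
Proof. by []. Qed.

Lemma exX k : k < m'.+1 -> exists X : {set 'I_m}, [/\ #|X| = k.+1, ord_max \in X & ord0 \notin X].
Proof.
elim: k => [_|k IH hk].
  by exists [set ord_max]; rewrite cards1 !inE eqxx.
case: IH => [|X [cX mX oX]]; first exact: ltnW.
have : #|ord0 |: X| < #|'I_m|.
  by rewrite cardsU1 oX cX card_ord.
rewrite -(cardsC (ord0 |: X)) -{1}(addn0 #|_|) ltn_add2l card_gt0 => /set0Pn [y].
rewrite !inE negb_or => /andP [y0 yX].
exists (y |: X); rewrite cardsU1 (negbTE yX) cX !inE mX orbT; split => //.
by rewrite negb_or oX eq_sym y0.
Qed.

Definition reach0 (T : {set 'I_m}) := exists w p, foldl (delta WC) (start WC) w = (T, p).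
Definition reach (S : {set 'I_m}) := forall p, exists w, foldl (delta WC) (start WC) w = (S, p).

Lemma step1 T (f : 'I_m -> 'I_m) : reach0 T -> reach (close WM [set f q | q in Sp WM T]).
Proof.
move=> [w [p' hw]] p; exists (rcons w ([ffun q => f q], [ffun _ => p])).
rewrite foldl_rcons hw /= ffunE /sdelta; congr (close _ _, _).
by apply: eq_imset => q /=; rewrite ffunE.
Qed.

Lemma F2 T S : reach0 T -> S != set0 -> #|S| <= #|Sp WM T| -> ord_max \notin S -> reach S.
Proof.
move=> hT hS hc hm; case: (surj hS hc) => f hf.
have := step1 f hT; rewrite hf /close.
have -> : [exists q in S, final WM q] = false.
  apply/negbTE; apply/existsP => -[q /andP [qS /eqP qm]]; by move: hm; rewrite -qm qS.
done.
Qed.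

Lemma F3 T X : reach0 T -> X != set0 -> #|X| <= #|Sp WM T| -> ord_max \in X -> reach (ord0 |: X).
Proof.
move=> hT hS hc hm; case: (surj hS hc) => f hf.
have := step1 f hT; rewrite hf /close.
have -> : [exists q in X, final WM q] = true.
  by apply/existsP; exists ord_max; rewrite hm /=.
done.
Qed.

Lemma reach_r0 S : reach S -> reach0 S.
Proof. by move=> /(_ ord0) [w hw]; exists w, ord0. Qed.

Lemma Sp_id (S : {set 'I_m}) : S != set0 -> Sp WM S = S.
Proof. by rewrite /Sp => /negbTE ->. Qed.

Lemma reach_all k (S : {set 'I_m}) : S != set0 -> ((ord_max \in S) ==> (ord0 \in S)) -> #|S| <= k.+1 -> reach S.
Proof.
elim: k S => [|k IH] S hS hv hc.
  have hm : ord_max \notin S.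
    apply/negP => hm; move: hv; rewrite hm /= => h0.
    have : #|([set ord0; ord_max] : {set 'I_m})| <= #|S|.
      by apply: subset_leq_card; apply/subsetP => q; rewrite !inE => /orP [] /eqP ->.
    by rewrite cards2 ord0_max => /(leq_trans) /(_ hc).
  apply: (@F2 set0) => //; first by exists [::], ord0.
  by rewrite /Sp eqxx cards1.
case: (ltnP #|S| k.+2) => hc'; first by apply: IH.
have hcS : #|S| = k.+2 by apply/eqP; rewrite eqn_leq hc.
case: (boolP (ord_max \in S)) => hm.
  have h0 : ord0 \in S by move: hv; rewrite hm.
  set T := S :\ ord_max.
  have cT : #|T| = k.+1 by move: hcS; rewrite (cardsD1 ord_max) hm /= add1n => -[].
  have rT : reach T.
    apply: IH; rewrite ?cT //.
      by rewrite -card_gt0 cT.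
    by rewrite !inE eqxx.
  have eS : ord0 |: (S :\ ord0) = S by apply: setD1K.
  rewrite -eS; apply: (F3 (reach_r0 rT)).
  - by apply/set0Pn; exists ord_max; rewrite !inE eq_sym ord0_max hm.
  - rewrite Sp_id; last by rewrite -card_gt0 cT.
    have c0 : #|S :\ ord0| = k.+1 by move: hcS; rewrite [#|S|](cardsD1 ord0) h0 /= add1n => -[].
    by rewrite c0 cT.
  - by rewrite !inE eq_sym ord0_max hm.
case/set0Pn: hS => s hs.
set T := S :\ s.
have cT : #|T| = k.+1 by move: hcS; rewrite (cardsD1 s) hs /= add1n => -[].
have rT : reach T.
  apply: IH; rewrite ?cT //.
    by rewrite -card_gt0 cT.
  by rewrite !inE (negbTE hm) andbF.
have hk : k < m'.+1.
  have := max_card (mem (ord_max |: S)); rewrite cardsU1 hm hcS card_ord.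
  by rewrite /= add1n !ltnS => /ltnW.
case: (exX hk) => X [cX mX oX].
have rU : reach (ord0 |: X).
  apply: (F3 (reach_r0 rT)).
  - by apply/set0Pn; exists ord_max.
  - by rewrite Sp_id ?cT ?cX // -card_gt0 cT.
  - done.
apply: (F2 (reach_r0 rU)) => //.
- by apply/set0Pn; exists s.
- by rewrite Sp_id; [rewrite cardsU1 oX cX hcS | apply/set0Pn; exists ord0; rewrite setU11].
Qed.

End Witness.

Section W2.
Variables m' n' : nat.
Notation m := m'.+2.
Notation n := n'.+2.
Notation WC := (WC m' n').
Notation WM := (WM m' n').
Notation WN := (WN m' n').
Notation Sig := (Sig m' n').
Notation V := (valid (ord_max : 'I_m) ord0 (ord0 : 'I_n)).

Lemma reach_valid s : V s -> exists w, foldl (delta WC) (start WC) w = s.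
Proof.
case: s => S p; rewrite /valid /=; case: ifP => [/eqP -> /eqP ->|/negbT hS hv].
  by exists [::].
have := @reach_all m' n' #|S| S hS hv (leqnSn _).
by move=> /(_ p).
Qed.

Lemma acc1E S p (F : 'I_m -> 'I_m) (G : 'I_n -> 'I_n) :
  final WC (foldl (delta WC) (S, p) [:: ([ffun x => F x], [ffun x => G x])]) =
  (ord_max \in [set F q | q in Sp WM S]) && (G p == ord0).
Proof.
rewrite /= ffunE; congr (_ && _).
rewrite /sfinal (negbTE (sdelta_n0 _ _ _)) /= /sdelta close_final.
have -> : [set [ffun x => F x] q | q in Sp WM S] = [set F q | q in Sp WM S].
  by apply: eq_imset => q; rewrite ffunE.
apply/existsP/idP => [[q /andP [h /eqP <-]] //|h].
by exists ord_max; rewrite h /=.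
Qed.

Lemma Sp_n0' S : Sp WM S != set0.
Proof. exact: Sp_n0. Qed.

Lemma sfin0 : sfinal WM [set ord0] = false.
Proof.
apply/negbTE; rewrite /sfinal negb_or; apply/andP; split.
  by apply/set0Pn; exists ord0; rewrite inE.
apply/existsP => -[q]; rewrite inE => /andP [/eqP -> ] /=.
by [].
Qed.

Lemma dist s t : V s -> V t -> s != t ->
  exists z, final WC (foldl (delta WC) s z) != final WC (foldl (delta WC) t z).
Proof.
case: s t => S1 p1 [S2 p2] v1 v2 st.
case: (Sp WM S1 =P Sp WM S2) => e.
  case: (p1 =P p2) => ep.
    subst p2; exists [::] => /=.
    case: (S1 =P set0) => e1.
      subst S1; move: v1; rewrite /valid /= eqxx => /eqP ->.
      have n2 : S2 != set0 by apply/negP => /eqP h; move: st; rewrite h eqxx.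
      move: e; rewrite /Sp eqxx (negbTE n2) => <-.
      by rewrite /= eqxx sfin0 /sfinal eqxx.
    case: (S2 =P set0) => e2.
      subst S2; move: v2; rewrite /valid /= eqxx => /eqP ->.
      move: e; rewrite /Sp eqxx; move/eqP: e1 => /negbTE -> ->.
      by rewrite /= eqxx sfin0 /sfinal eqxx.
    move: e; rewrite /Sp; move/eqP: e1 => /negbTE ->; move/eqP: e2 => /negbTE -> e.
    by move: st; rewrite e eqxx.
  exists [:: ([ffun _ => ord_max], [ffun x => if x == p1 then ord0 else ord_max])].
  rewrite !acc1E eqxx; have -> : (p2 == p1) = false by apply/eqP => h; apply: ep; rewrite h.
  rewrite andbT andbF; case/set0Pn: (Sp_n0' S1) => q hq.
  suff -> : ord_max \in [set (ord_max : 'I_m) | _ in Sp WM S1] by []. by apply/imsetP; exists q.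
have : ~~ [forall q, (q \in Sp WM S1) == (q \in Sp WM S2)].
  by apply/negP => /forallP h; apply: e; apply/setP => q; apply/eqP.
rewrite negb_forall => /existsP [q hq].
exists [:: ([ffun x => if x == q then ord_max else ord0], [ffun _ => ord0])].
rewrite !acc1E !eqxx !andbT.
have memF : forall X : {set 'I_m}, ((ord_max : 'I_m) \in [set (if x == q then (ord_max : 'I_m) else ord0) | x in X]) = (q \in X).
  move=> X; apply/imsetP/idP => [[x hx]|hx]; last by exists q; rewrite ?eqxx.
  by case: (x =P q) => [<- _ //|_] /eqP.
by rewrite !memF.
Qed.

Lemma lang_WC w : inter (star (lang WM)) (lang WN) w <-> lang WC w.
Proof.
apply: iff_sym; apply: iff_trans (prodD_lang _ _ _) _.
by split => [[h1 h2]|[h1 h2]]; split => //; apply/(star_correct WM).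
Qed.

Lemma lower k' (A : dfa Sig 'I_k') :
  recognizes A (inter (star (lang WM)) (lang WN)) -> #|[set s | V s]| <= k'.
Proof.
move=> hA.
have ex : forall v : {s | V s}, exists w, foldl (delta WC) (start WC) w == val v.
  by move=> v; case: (reach_valid (valP v)) => w hw; exists w; rewrite hw.
pose phi (v : {s | V s}) := foldl (delta A) (start A) (xchoose (ex v)).
have key : forall w1 w2, foldl (delta A) (start A) w1 = foldl (delta A) (start A) w2 ->
   forall z, final WC (foldl (delta WC) (start WC) (w1 ++ z)) = final WC (foldl (delta WC) (start WC) (w2 ++ z)).
  move=> w1 w2 h z.
  have e : lang A (w1 ++ z) = lang A (w2 ++ z) by rewrite /lang !foldl_cat h.
  apply/idP/idP => H.
    have : lang A (w1 ++ z) by apply/hA/lang_WC.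
    by rewrite e => /hA /lang_WC.
  have : lang A (w2 ++ z) by apply/hA/lang_WC.
  by rewrite -e => /hA /lang_WC.
have inj : injective phi.
  move=> v1 v2 h; apply: val_inj; apply/eqP/negPn/negP => ne.
  case: (dist (valP v1) (valP v2) ne) => z; rewrite -(eqP (xchooseP (ex v1))) -(eqP (xchooseP (ex v2))).
  by rewrite -!foldl_cat (key _ _ h) eqxx.
have := @leq_card _ _ phi inj; rewrite card_sig card_ord.
by rewrite cardsE.
Qed.

End W2.
Unset Implicit Arguments.

Theorem theorem6 (m n : nat) (hm : 2 <= m) (hn : 2 <= n) :
  (forall (Sigma : finType) (M : dfa Sigma 'I_m) (N : dfa Sigma 'I_n),
     exists k, k <= 3 * 2 ^ (m - 2) * n - n + 1 /\
       exists A : dfa Sigma 'I_k, recognizes A (inter (star (lang M)) (lang N))) /\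
  (exists (Sigma : finType) (M : dfa Sigma 'I_m) (N : dfa Sigma 'I_n),
     state_complexity_is (inter (star (lang M)) (lang N)) (3 * 2 ^ (m - 2) * n - n + 1)).
Proof.
case: m hm => [|[|m']] // _; case: n hn => [|[|n']] // _.
have eB : 3 * 2 ^ (m'.+2 - 2) * n'.+2 - n'.+2 + 1 =
   1 + (3 * 2 ^ (#|'I_m'.+2| - 2) - 1) * #|'I_n'.+2|.
  by rewrite !card_ord mulnBl mul1n addnC.
rewrite eB; split.
  move=> Sigma M N; exists (1 + (3 * 2 ^ (#|'I_m'.+2| - 2) - 1) * #|'I_n'.+2|); split => //.
  by apply: upper; rewrite card_ord.
exists (Sig m' n'), (WM m' n'), (WN m' n'); split.
  by apply: upper; rewrite card_ord.
move=> k' A hA; have := lower hA; rewrite card_valid //.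
Qed.
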